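(* Let $n_0\ge 1$ be an integer and let $a_{-n_0},\dots,a_{n_0}$ be complex numbers with $a_j=\overline{a_{-j}}$ for all $j$. Let $\phi(e^{i\theta})=\sum_{n=-n_0}^{n_0}a_ne^{in\theta}$ and, for $N\ge 1$, let $T_N=T_N(\phi)$ be the $(N+1)\times(N+1)$ band Toeplitz matrix with entries $(T_N)_{k+1,l+1}=a_{k-l}$ if $|k-l|\le n_0$ and $0$ otherwise ($0\le k,l\le N$). Let $K(z)=\sum_{m=-n_0}^{n_0}a_m z^{m+n_0}$, and assume that $K$ has no root of modulus $1$, that $K$ has exactly $n_0$ roots (counted with multiplicity) of modulus $<1$ and $n_0$ roots of modulus $>1$, and that $K$ is normalized so that its leading coefficient is $1$, i.e. $K(z)=\prod_{i=1}^{\sigma}(z-\alpha_i)^{s_i}\prod_{j=1}^{\sigma}(z-\overline{\alpha_j}^{-1})^{s_j}$ where $\alpha_1,\dots,\alpha_\sigma$ are the distinct roots of $K$ of modulus $<1$, with multiplicities $s_i$, $\sum_i s_i=n_0$. Then: (i) $T_N$ is invertible; (ii) let $x\in]0,1[$ and let $k=k_N$, $l=l_N\in\{0,\dots,N\}$ satisfy $|k-l|=Nx$. Then for every real $a\in]0,1[$ and every real $\rho$ with $\max\{|\alpha_i|:1\le i\le\sigma\}<\rho<1$, one has $(T_N^{-1})_{k+1,l+1}=o(\rho^{a|k-l|})$ as $N\to\infty$. *)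

(* Defs.v *)
From HB Require Import structures.
From mathcomp Require Import all_boot all_order all_algebra.
From mathcomp Require Import reals exp.
From mathcomp Require Import complex.
Set Implicit Arguments. Unset Strict Implicit. Unset Printing Implicit Defensive.
Import Order.TTheory GRing.Theory Num.Theory.
Local Open Scope ring_scope.

Definition toeplitz_band (C : nzRingType) (n0 N : nat) (a : int -> C)
  : 'M[C]_(N.+1) :=
  \matrix_(k < N.+1, l < N.+1)
     if (`|(k%:Z - l%:Z)%R|%N <= n0)%N then a (k%:Z - l%:Z) else 0.

Definition Kpoly (C : nzRingType) (n0 : nat) (a : int -> C) : {poly C} :=
  \sum_(i < (n0.*2).+1) a (i%:Z - n0%:Z) *: 'X^i.

(* Main.v *)
From HB Require Import structures.
From mathcomp Require Import all_boot all_order all_algebra.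
From mathcomp Require Import reals sequences exp.
From mathcomp Require Import complex.
From mathcomp Require Import zify ring lra.
Set Implicit Arguments. Unset Strict Implicit. Unset Printing Implicit Defensive.
Import Order.TTheory GRing.Theory Num.Theory.
Local Open Scope ring_scope.
Local Open Scope complex_scope.

Definition nr (R : realType) (z : R[i]) : R := complex.Re (`|z|).

Lemma nrE (R : realType) (z : R[i]) : `|z| = (nr z)%:C.
Proof. by rewrite /nr normc_def. Qed.

Lemma nr_ge0 (R : realType) (z : R[i]) : 0 <= nr z.
Proof. by rewrite -ler0c -nrE. Qed.

Lemma nrM (R : realType) (z w : R[i]) : nr (z * w) = nr z * nr w.
Proof. by apply: complexI; rewrite rmorphM -!nrE normrM. Qed.

Lemma nrD (R : realType) (z w : R[i]) : nr (z + w) <= nr z + nr w.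
Proof. by rewrite -lecR rmorphD -!nrE ler_normD. Qed.

Lemma nrN (R : realType) (z : R[i]) : nr (- z) = nr z.
Proof. by apply: complexI; rewrite -!nrE normrN. Qed.

Lemma nrB (R : realType) (z w : R[i]) : nr (z - w) <= nr z + nr w.
Proof. by rewrite (le_trans (nrD _ _)) // nrN. Qed.

Lemma nr_sum (R : realType) (I : Type) (s : seq I) (P : pred I) (F : I -> R[i]) :
  nr (\sum_(i <- s | P i) F i) <= \sum_(i <- s | P i) nr (F i).
Proof.
rewrite -lecR rmorph_sum -nrE.
by rewrite (le_trans (ler_norm_sum _ _ _)) //; apply: ler_sum => i _; rewrite nrE.
Qed.

Lemma nrX (R : realType) (z : R[i]) n : nr (z ^+ n) = nr z ^+ n.
Proof. by apply: complexI; rewrite rmorphXn -!nrE normrX. Qed.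

Lemma nrJ (R : realType) (z : R[i]) : nr (z^*) = nr z.
Proof. by case: z => a b; rewrite /nr !normc_def /= sqrrN. Qed.

Lemma nr_real (R : realType) (x : R) : nr (x%:C) = `|x|.
Proof. by rewrite /nr normc_def /= expr0n /= addr0 sqrtr_sqr. Qed.

Lemma nr0 (R : realType) : nr (0 : R[i]) = 0.
Proof. by apply: complexI; rewrite -nrE normr0. Qed.

Lemma nr1 (R : realType) : nr (1 : R[i]) = 1.
Proof. by apply: complexI; rewrite -nrE normr1. Qed.

Lemma mulJ (R : realType) (z : R[i]) : z * z^* = (nr z ^+ 2)%:C.
Proof.
case: z => a b; rewrite /nr normc_def /= sqr_sqrtr ?addr_ge0 ?sqr_ge0 //.
by apply/eqP; rewrite eq_complex /=; apply/andP; split; apply/eqP; ring.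
Qed.

Lemma nr_eq0 (R : realType) (z : R[i]) : (nr z == 0) = (z == 0).
Proof. by rewrite -(inj_eq (@complexI R)) -nrE normr_eq0. Qed.

Definition rv (R : realType) (phi : {rmorphism R[i] -> R[i]}) (n : nat)
  (p : {poly R[i]}) : {poly R[i]} := \poly_(j < n.+1) phi (p`_(n - j)).

Lemma rv_XsubC (R : realType) (phi : {rmorphism R[i] -> R[i]}) n (p : {poly R[i]}) z :
  (size p <= n.+1)%N ->
  rv phi n.+1 (('X - z%:P) * p) = (1 - phi z *: 'X) * rv phi n p.
Proof.
move=> sp; apply/polyP => j.
rewrite /rv [in RHS]mulrBl mul1r -scalerAl coefB coefZ coefXM !coef_poly mulrBl coefB coefXM coefCM.
have p0 : forall i, (n.+1 <= i)%N -> p`_i = 0.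
  move=> i hi; apply: nth_default; exact: leq_trans sp hi.
case: j => [|j] /=.
  by rewrite subn0 (p0 n.+1) // mulr0 subr0 mulr0 subr0 subn0.
rewrite subSS.
case: (ltnP j n) => hj.
  have h1 : (j.+1 < n.+2)%N by lia.
  have h2 : (j.+1 < n.+1)%N by lia.
  have h3 : (j < n.+1)%N by lia.
  have h4 : (n - j)%N == 0%N = false by apply/eqP; lia.
  have h5 : (n - j).-1 = (n - j.+1)%N by lia.
  by rewrite h1 h2 h3 h4 h5 rmorphB rmorphM.
case: (ltnP n j) => hj'.
  have h1 : (j.+1 < n.+2)%N = false by apply/negbTE; lia.
  have h3 : (j < n.+1)%N = false by apply/negbTE; lia.
  have h2 : (j.+1 < n.+1)%N = false by apply/negbTE; lia.
  by rewrite h1 h2 h3 mulr0 subr0.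
have ej : j = n by lia.
subst j; rewrite subnn ltnSn ltnn eqxx sub0r rmorphN rmorphM.
by rewrite ltnS leqnn sub0r.
Qed.

Lemma rv_prod (R : realType) (phi : {rmorphism R[i] -> R[i]}) (L : seq R[i]) :
  rv phi (size L) (\prod_(z <- L) ('X - z%:P)) = \prod_(z <- L) (1 - phi z *: 'X).
Proof.
elim: L => [|z L IH].
  rewrite !big_nil; apply/polyP => j; rewrite /rv coef_poly coef1.
  by case: j => [|j]; rewrite /= !coef1 /= ?rmorph1.
by rewrite !big_cons /= rv_XsubC ?IH // size_prod_XsubC.
Qed.

Lemma sum_window (V : nmodType) (F : nat -> V) M l w :
  (l + w < M)%N -> (forall r, ((r < l)%N || (l + w < r)%N) -> F r = 0) ->
  \sum_(r < M) F r = \sum_(i < w.+1) F (i + l)%N.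
Proof.
move=> hM hF.
rewrite -(big_mkord xpredT F) (@big_cat_nat _ _ _ l) /=; [|lia|lia].
have -> : \sum_(0 <= r < l) F r = 0.
  rewrite big_nat_cond big1 // => r /andP[/andP[_ h] _]; apply: hF; by rewrite h.
rewrite add0r (@big_cat_nat _ _ _ (l + w.+1)) /=; [|lia|lia].
have -> : \sum_(l + w.+1 <= r < M) F r = 0.
  rewrite big_nat_cond big1 // => r /andP[/andP[h _] _]; apply: hF; apply/orP; right; lia.
rewrite addr0 -{1}(add0n l) big_addn.
have -> : (l + w.+1 - l)%N = w.+1 by lia.
by rewrite big_mkord.
Qed.

Definition ut (R : realType) N (p : {poly R[i]}) : 'M[R[i]]_N.+1 :=
  \matrix_(s, k) (if (s <= k)%N then p`_(k - s) else 0).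

Lemma ut_mul (R : realType) N (p q : {poly R[i]}) : ut N p *m ut N q = ut N (p * q).
Proof.
apply/matrixP => s k; rewrite !mxE coefM; under eq_bigr => j _ do rewrite !mxE.
case: (leqP s k) => hsk.
  etransitivity.
    apply: (@sum_window _ (fun t => (if (s <= t)%N then p`_(t - s) else 0) *
        (if (t <= k)%N then q`_(k - t) else 0)) N.+1 s (k - s)).
    - have := ltn_ord k; lia.
    - move=> r /orP[] hr.
        have -> : (s <= r)%N = false by apply/negbTE; rewrite -ltnNge.
        by rewrite mul0r.
      have -> : (r <= k)%N = false by apply/negbTE; rewrite -ltnNge; lia.
      by rewrite mulr0.
  apply: eq_bigr => i _ /=.
  have -> : (s <= i + s)%N by lia.
  have -> : (i + s <= k)%N by have := ltn_ord i; lia.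
  have -> : (i + s - s)%N = i by lia.
  by have -> : (k - (i + s))%N = (k - s - i)%N by lia.
rewrite big1 // => t _.
case: (leqP s t) => h1; case: (leqP t k) => h2; rewrite ?mulr0 ?mul0r //.
lia.
Qed.

Lemma ut1 (R : realType) N : ut N (1 : {poly R[i]}) = 1%:M.
Proof.
apply/matrixP => s k; rewrite !mxE coef1.
case: (leqP s k) => h.
  case: (eqVneq s k) => [->|ne]; first by rewrite subnn.
  have hn : (s : nat) != k := ne.
  by rewrite subn_eq0 leqNgt ltn_neqAle hn h.
have -> // : (s == k) = false by apply/eqP => e; move: h; rewrite e ltnn.
Qed.

Lemma ut_prod (R : realType) N (L : seq R[i]) (f : R[i] -> {poly R[i]}) :
  ut N (\prod_(z <- L) f z) = \prod_(z <- L) ut N (f z).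
Proof.
elim: L => [|z L IH]; first by rewrite !big_nil ut1.
by rewrite !big_cons -ut_mul IH mulmxE.
Qed.

Definition geom (R : realType) (z : R[i]) N : {poly R[i]} := \poly_(j < N.+1) z ^+ j.

Lemma ut_geom (R : realType) N (z : R[i]) : ut N ((1 - z *: 'X) * geom z N) = 1%:M.
Proof.
rewrite -ut1; apply/matrixP => s k; rewrite !mxE.
case: (leqP s k) => // h.
rewrite mulrBl mul1r -scalerAl coefB coefZ coefXM !coef_poly coef1.
have hk : (k - s < N.+1)%N by have := ltn_ord k; lia.
rewrite hk.
case e: (k - s)%N => [|i]; first by rewrite /= expr0 mulr0 subr0.
have -> : (i < N.+1)%N by lia.
by rewrite /= -exprS subrr.
Qed.

Lemma geo_eq (R : realType) (t : R) n : (1 - t) * \sum_(j < n) t ^+ j = 1 - t ^+ n.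
Proof.
elim: n => [|n IH]; first by rewrite big_ord0 mulr0 expr0 subrr.
by rewrite big_ord_recr /= mulrDr IH exprS; ring.
Qed.

Lemma geo_le (R : realType) (t : R) n : 0 <= t -> t < 1 ->
  \sum_(j < n) t ^+ j <= (1 - t)^-1.
Proof.
move=> t0 t1.
have h1 : 0 < 1 - t by lra.
rewrite -(ler_pM2l h1) mulfV ?gt_eqF // geo_eq.
have := exprn_ge0 n t0; lra.
Qed.

Lemma pow_div_lem (R : realType) (a b : R) n j : b != 0 -> (j <= n)%N ->
  b ^+ n * (a / b) ^+ j = a ^+ j * b ^+ (n - j).
Proof.
move=> hb hj; rewrite exprMn exprVn -{1}(subnK hj) exprD.
by field; rewrite expf_neq0.
Qed.

Lemma geom_coef (R : realType) (z : R[i]) N n :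
  (geom z N)`_n = if (n < N.+1)%N then z ^+ n else 0.
Proof. by rewrite /geom coef_poly. Qed.

Lemma geomprod_bound (R : realType) (L : seq R[i]) (r0 r : R) :
  0 <= r0 -> r0 < r -> (forall z, z \in L -> nr z <= r0) ->
  exists M : R, 0 <= M /\ forall N n,
    nr ((\prod_(z <- L) geom z N)`_n) <= M * r ^+ n.
Proof.
elim: L r => [|z L IH] r h0 h1 hL.
  exists 1; split => // N n; rewrite big_nil coef1 mul1r.
  case: n => [|n] /=; first by rewrite expr0 nr1.
  by rewrite nr0 exprn_ge0 //; lra.
pose r' := (r0 + r) / 2.
have hr'0 : r0 < r' by rewrite /r'; lra.
have hr'1 : r' < r by rewrite /r'; lra.
have hr'p : 0 < r' by lra.
have hL' : forall w, w \in L -> nr w <= r0 by move=> w hw; apply: hL; rewrite inE hw orbT.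
have [M' [M'0 HM']] := IH r' h0 hr'0 hL'.
have hz : nr z <= r0 by apply: hL; rewrite inE eqxx.
pose t := r0 / r'.
have t0 : 0 <= t by rewrite /t divr_ge0 //; lra.
have t1 : t < 1 by rewrite /t ltr_pdivrMr // mul1r.
exists (M' * (1 - t)^-1); split.
  by rewrite mulr_ge0 // invr_ge0; lra.
move=> N n; rewrite big_cons coefM.
apply: (le_trans (nr_sum _ _ _)).
apply: (@le_trans _ _ (\sum_(j < n.+1) M' * r' ^+ n * t ^+ j)).
  apply: ler_sum => j _; rewrite nrM.
  have hj : (j <= n)%N by have := ltn_ord j; lia.
  have e : r' ^+ n * t ^+ j = r0 ^+ j * r' ^+ (n - j).
    by rewrite /t; apply: pow_div_lem; rewrite // gt_eqF.
  rewrite -mulrA e mulrCA.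
  apply: ler_pM.
  - exact: nr_ge0.
  - exact: nr_ge0.
  - rewrite geom_coef; case: ifP => _; last by rewrite nr0 exprn_ge0.
    by rewrite nrX lerXn2r ?nnegrE ?nr_ge0.
  - exact: HM'.
rewrite -big_distrr /=.
apply: (@le_trans _ _ (M' * r' ^+ n * (1 - t)^-1)).
  by apply: ler_wpM2l; [rewrite mulr_ge0 // exprn_ge0; lra | exact: geo_le t0 t1].
rewrite -!mulrA; apply: ler_wpM2l => //.
rewrite [_ * (1 - t)^-1]mulrC.
apply: ler_wpM2l; first by rewrite invr_ge0; lra.
by rewrite lerXn2r ?nnegrE; lra.
Qed.

Require Import Defs.

Lemma Kcoef (R : realType) n0 (a : int -> R[i]) j : (j < (n0.*2).+1)%N ->
  (Kpoly n0 a)`_j = a (j%:Z - n0%:Z).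
Proof.
move=> hj; rewrite /Kpoly coef_sum (bigD1 (Ordinal hj)) //= coefZ coefXn eqxx mulr1.
rewrite big1 ?addr0 // => i /eqP ne; rewrite coefZ coefXn.
have -> : (j == i) = false; last by rewrite mulr0.
by apply/eqP => e; apply: ne; apply/val_inj.
Qed.

Lemma K_lead (R : realType) n0 (a : int -> R[i]) (alpha : seq R[i]) :
  size alpha = n0 ->
  Kpoly n0 a = \prod_(z <- alpha) ('X - z%:P) * \prod_(z <- alpha) ('X - ((z^*)^-1)%:P) ->
  a n0%:Z = 1.
Proof.
move=> hs hK.
have m1 : \prod_(z <- alpha) ('X - z%:P) \is monic by apply: monic_prod_XsubC.
have m2 : \prod_(z <- alpha) ('X - ((z^*)^-1)%:P) \is monic by apply: monic_prod_XsubC.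
have sK : size (Kpoly n0 a) = (n0.*2).+1.
  rewrite hK size_mul ?monic_neq0 // !size_prod_XsubC hs; lia.
have : lead_coef (Kpoly n0 a) = 1 by rewrite hK; apply/monicP; rewrite monicMl.
rewrite lead_coefE sK /= Kcoef //.
by have -> : ((n0.*2)%:Z - n0%:Z)%R = n0%:Z by rewrite -addnn PoszD addrK.
Qed.

Lemma alpha_nz (R : realType) n0 (a : int -> R[i]) (alpha : seq R[i]) :
  size alpha = n0 ->
  (forall j : int, (`|j| <= n0)%N -> a j = (a (- j))^*) ->
  Kpoly n0 a = \prod_(z <- alpha) ('X - z%:P) * \prod_(z <- alpha) ('X - ((z^*)^-1)%:P) ->
  0 \notin alpha.
Proof.
move=> hs hh hK; apply/negP => h0.
have a1 := K_lead hs hK.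
have : (Kpoly n0 a)`_0 = 1.
  rewrite Kcoef // sub0r hh ?abszN // opprK a1.
  exact: conjc1.
rewrite hK coef0M -horner_coef0.
have : root (\prod_(z <- alpha) ('X - z%:P)) 0 by rewrite root_prod_XsubC.
by move/rootP => ->; rewrite mul0r => /eqP; rewrite eq_sym oner_eq0.
Qed.

Lemma factor_eq (R : realType) (w : R[i]) : w != 0 ->
  'X - (w^-1)%:P = (- w^-1)%:P * (1 - w *: 'X).
Proof.
move=> hw; rewrite mul_polyC scalerBr scalerA mulNr mulVf // scaleN1r opprK.
by rewrite -mul_polyC mulr1 polyCN addrC.
Qed.

Lemma g_eq (R : realType) n0 (alpha : seq R[i]) :
  size alpha = n0 -> 0 \notin alpha ->
  \prod_(z <- alpha) ('X - ((z^*)^-1)%:P) =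
  (\prod_(z <- alpha) (- (z^*)^-1))%:P * rv conjc n0 (\prod_(z <- alpha) ('X - z%:P)).
Proof.
move=> hs h0.
rewrite -hs rv_prod rmorph_prod -big_split /= big_seq [RHS]big_seq.
apply: eq_bigr => z hz; apply: factor_eq.
by rewrite conjc_eq0; apply: contraNneq h0 => <-.
Qed.

Lemma sum_split_nat (V : nmodType) (F : nat -> V) m n :
  \sum_(r < m + n) F r = \sum_(r < m) F r + \sum_(s < n) F (s + m)%N.
Proof.
rewrite -(big_mkord xpredT F) (@big_cat_nat _ _ _ m) /=; [|lia|lia].
rewrite big_mkord; congr (_ + _).
rewrite -{1}(add0n m) big_addn.
have -> : (m + n - m)%N = n by lia.
by rewrite big_mkord.
Qed.

Definition Bf (R : realType) (h : {poly R[i]}) (r k : nat) : R[i] :=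
  if (k <= r)%N then h`_(r - k) else 0.

Definition Emx (R : realType) (h : {poly R[i]}) n0 N : 'M[R[i]]_(n0, N.+1) :=
  \matrix_(r, k) Bf h r k.
Definition Umx (R : realType) (h : {poly R[i]}) n0 N : 'M[R[i]]_(N.+1) :=
  \matrix_(s, k) Bf h (s + n0) k.
Definition adj (R : realType) m n (A : 'M[R[i]]_(m, n)) : 'M[R[i]]_(n, m) :=
  \matrix_(i, j) (A j i)^*.

Lemma toep_fact (R : realType) n0 N (a : int -> R[i]) (h : {poly R[i]}) (c : R[i]) :
  size h = n0.+1 ->
  Kpoly n0 a = h * (c%:P * rv conjc n0 h) ->
  toeplitz_band n0 N a =
    c *: (adj (Emx h n0 N) *m Emx h n0 N + adj (Umx h n0 N) *m Umx h n0 N).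
Proof.
move=> hsz hK.
have h0 : forall i, (n0 < i)%N -> h`_i = 0.
  by move=> i hi; apply: nth_default; rewrite hsz.
apply/matrixP => k l; rewrite !mxE.
under eq_bigr => r _ do rewrite !mxE.
under [X in _ = c * (_ + X)]eq_bigr => r _ do rewrite !mxE.
set G := fun r : nat => (Bf h r k)^* * Bf h r l.
have -> : \sum_(r < n0) (Bf h r k)^* * Bf h r l +
          \sum_(s < N.+1) (Bf h (s + n0) k)^* * Bf h (s + n0) l =
          \sum_(r < n0 + N.+1) G r by rewrite sum_split_nat.
have hk := ltn_ord k; have hl := ltn_ord l.
case: ifP => hkl.
  have [j ej] : {j | j = (k + n0 - l)%N} by exists (k + n0 - l)%N.
  have hj : (j < (n0.*2).+1)%N by lia.
  have -> : (k%:Z - l%:Z)%R = (j%:Z - n0%:Z)%R by lia.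
  rewrite -Kcoef // hK mulrCA coefCM coefM.
  rewrite (@sum_window _ G (n0 + N.+1) l j); last 2 first.
  - lia.
  - move=> r /orP[] hr; rewrite /G /Bf.
      have -> : (l <= r)%N = false by apply/negbTE; rewrite -ltnNge.
      by rewrite mulr0.
    case: ifP => // hkr; rewrite h0 ?rmorph0 ?mul0r //; lia.
  congr (_ * _); apply: eq_bigr => i _; rewrite /G /Bf coef_poly.
  have hi := ltn_ord i.
  have -> : (l <= i + l)%N by lia.
  have -> : (i + l - l)%N = i by lia.
  case: (leqP k (i + l)) => hki.
    have -> : (j - i < n0.+1)%N by lia.
    have -> : (n0 - (j - i))%N = (i + l - k)%N by lia.
    by rewrite mulrC.

  have -> : (j - i < n0.+1)%N = false by apply/negbTE; lia.
  by rewrite rmorph0 mul0r mulr0.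
rewrite big1 ?mulr0 // => r _; rewrite /G /Bf.
case: ifP => hkr; last by rewrite rmorph0 mul0r.
case: ifP => hlr; last by rewrite mulr0.
case: (leqP (r - k) n0) => h1; last by rewrite (h0 (r - k)%N) // rmorph0 mul0r.
case: (leqP (r - l) n0) => h2; last by rewrite (h0 (r - l)%N) // mulr0.
exfalso; move/negbT: hkl; lia.
Qed.

Lemma adj_mul (R : realType) m n p (A : 'M[R[i]]_(m, n)) (B : 'M[R[i]]_(n, p)) :
  adj (A *m B) = adj B *m adj A.
Proof.
apply/matrixP => i j; rewrite !mxE rmorph_sum; apply: eq_bigr => k _.
by rewrite !mxE rmorphM mulrC.
Qed.

Lemma adj1 (R : realType) n : adj (1%:M : 'M[R[i]]_n) = 1%:M.
Proof.
apply/matrixP => i j; rewrite !mxE rmorph_nat eq_sym; done.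


Qed.

Lemma adjD (R : realType) m n (A B : 'M[R[i]]_(m, n)) : adj (A + B) = adj A + adj B.
Proof. by apply/matrixP => i j; rewrite !mxE rmorphD. Qed.

Lemma quad (R : realType) m (u : 'rV[R[i]]_m) :
  (u *m adj u) 0 0 = (\sum_j nr (u 0 j) ^+ 2)%:C.
Proof.
rewrite !mxE rmorph_sum; apply: eq_bigr => j _; by rewrite mxE mulJ.
Qed.

Lemma sum_sq_eq0 (R : realType) m (f : 'I_m -> R) :
  \sum_j f j ^+ 2 = 0 -> forall j, f j = 0.
Proof.
move=> h j; have := h; move/eqP; rewrite psumr_eq0 => [|i _]; last exact: sqr_ge0.
by move/allP/(_ j (mem_index_enum j)) => /implyP/(_ isT); rewrite sqrf_eq0 => /eqP.
Qed.

Lemma quad_form (R : realType) n0 m (F : 'M[R[i]]_(n0, m)) (y : 'rV[R[i]]_n0) (G : 'M[R[i]]_(n0, n0)) :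
  G = 1%:M + F *m adj F ->
  (y *m G *m adj y) 0 0 = (\sum_j nr (y 0 j) ^+ 2 + \sum_j nr ((y *m F) 0 j) ^+ 2)%:C.
Proof.
move=> ->; rewrite mulmxDr mulmx1 mulmxDl mxE quad rmorphD; congr (_ + _).
by rewrite mulmxA -mulmxA -adj_mul quad.
Qed.

Lemma M_unit (R : realType) n0 m (F : 'M[R[i]]_(n0, m)) :
  (1%:M + F *m adj F) \in unitmx.
Proof.
set G := 1%:M + F *m adj F.
have key : forall y : 'rV[R[i]]_n0, y *m G = 0 -> y = 0.
  move=> y hy.
  have : (y *m G *m adj y) 0 0 = 0 by rewrite hy mul0mx mxE.
  rewrite mulmxDr mulmx1 mulmxDl mxE quad mulmxA -mulmxA -adj_mul quad -rmorphD.
  move/(congr1 (@complex.Re R)) => /= /eqP.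
  rewrite paddr_eq0; first last.
  - by apply: sumr_ge0 => j _; apply: sqr_ge0.
  - by apply: sumr_ge0 => j _; apply: sqr_ge0.
  case/andP => /eqP h1 _.
  apply/matrixP => i j; rewrite mxE (ord1 i).
  by apply/eqP; rewrite -nr_eq0 (sum_sq_eq0 h1).
rewrite -row_free_unit -kermx_eq0; apply/eqP.
apply/matrixP => i j; rewrite mxE.
have h0 : row i (kermx G) *m G = 0.
  by rewrite -row_mul mulmx_ker; apply/matrixP => a b; rewrite !mxE.
by move/matrixP: (key _ h0) => /(_ 0 j); rewrite !mxE.
Qed.

Lemma sum_ge_term (R : realType) m (f : 'I_m -> R) q :
  (forall j, 0 <= f j) -> f q <= \sum_j f j.
Proof.
move=> h; rewrite (bigD1 q) //= lerDl; by apply: sumr_ge0 => j _.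
Qed.

Lemma W_bound (R : realType) n0 m (F : 'M[R[i]]_(n0, m)) p q :
  nr (invmx (1%:M + F *m adj F) p q) <= 1.
Proof.
set G := 1%:M + F *m adj F; set W := invmx G.
have hu : G \in unitmx by apply: M_unit.
pose y := row p W.
have hy : y *m G = row p 1%:M by rewrite /y -row_mul mulVmx.
have e := quad_form y (erefl G).
rewrite hy in e.
have e2 : (row p (1%:M : 'M[R[i]]_n0) *m adj y) 0 0 = (W p p)^*.
  rewrite mxE (bigD1 p) //= big1 ?addr0.
    by rewrite !mxE eqxx mul1r.
  by move=> j /negbTE ne; rewrite !mxE eq_sym ne mul0r.
rewrite e2 in e.
set S1 := \sum_j nr (y 0 j) ^+ 2 in e.
set S2 := \sum_j nr ((y *m F) 0 j) ^+ 2 in e.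
have S1ge : forall j, nr (W p j) ^+ 2 <= S1.
  move=> j; have -> : W p j = y 0 j by rewrite /y mxE.
  rewrite /S1; exact: (@sum_ge_term R n0 (fun j => nr (y 0 j) ^+ 2) j (fun k => sqr_ge0 _)).
have S2ge : 0 <= S2 by apply: sumr_ge0 => j _; apply: sqr_ge0.
have ex : nr (W p p) = S1 + S2.
  by rewrite -nrJ e nr_real ger0_norm // addr_ge0 // (le_trans (sqr_ge0 _) (S1ge p)).
have hpp := S1ge p; have hpq := S1ge q.
have x0 := nr_ge0 (W p p); have y0 := nr_ge0 (W p q).
have x1 : nr (W p p) <= 1 by nra.
nra.
Qed.

Lemma key1 (R : realType) n m (F : 'M[R[i]]_(n, m)) (W : 'M[R[i]]_n) :
  (1%:M + F *m adj F) *m W = 1%:M ->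
  (adj F *m F + 1%:M) *m (1%:M - adj F *m W *m F) = 1%:M.
Proof.
move=> hW; rewrite mulmxBr mulmx1 !mulmxA.
have -> : (adj F *m F + 1%:M) *m adj F = adj F *m (1%:M + F *m adj F).
  by rewrite mulmxDl mulmxDr mul1mx mulmx1 mulmxA addrC.
by rewrite -(mulmxA (adj F)) hW mulmx1 addrC addKr.
Qed.

Lemma inv_formula (R : realType) n0 N (E : 'M[R[i]]_(n0, N.+1)) (U V : 'M[R[i]]_N.+1)
  (c : R[i]) :
  c != 0 -> U *m V = 1%:M -> V *m U = 1%:M ->
  (c *: (adj E *m E + adj U *m U)) *m
  (c^-1 *: (V *m (1%:M - adj (E *m V) *m invmx (1%:M + (E *m V) *m adj (E *m V)) *m (E *m V))
     *m adj V)) = 1%:M.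
Proof.
move=> hc hUV hVU.
set F := E *m V; set W := invmx (1%:M + F *m adj F).
have hE : E = F *m U by rewrite /F -mulmxA hVU mulmx1.
have hW : (1%:M + F *m adj F) *m W = 1%:M by rewrite /W mulmxV // M_unit.
have hT : adj E *m E + adj U *m U = adj U *m ((adj F *m F + 1%:M) *m U).
  by rewrite {1 2}hE adj_mul mulmxDl mul1mx mulmxDr !mulmxA.
have k1 := key1 hW.
rewrite hT -scalemxAl -scalemxAr scalerA mulfV // scale1r.
rewrite -(mulmxA (adj U)).
have -> : ((adj F *m F + 1%:M) *m U) *m (V *m (1%:M - adj F *m W *m F) *m adj V)
    = (adj F *m F + 1%:M) *m (1%:M - adj F *m W *m F) *m adj V.
  by rewrite !mulmxA -(mulmxA _ U V) hUV mulmx1.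
by rewrite k1 mul1mx -adj_mul hVU adj1.
Qed.

Lemma geo_shift (R : realType) (t : R) m a : 0 <= t -> t < 1 ->
  \sum_(j < m) (if (a <= j)%N then t ^+ (j - a) else 0) <= (1 - t)^-1.
Proof.
move=> t0 t1.
have -> : \sum_(j < m) (if (a <= j)%N then t ^+ (j - a) else 0) = \sum_(i < m - a) t ^+ i.
  elim: m => [|m IH]; first by rewrite !big_ord0.
  rewrite big_ord_recr /= IH.
  case: (leqP a m) => h.
    have -> : (m.+1 - a)%N = (m - a).+1 by lia.
    by rewrite big_ord_recr.
  have -> : (m.+1 - a)%N = (m - a)%N by lia.
  by rewrite addr0.
exact: geo_le.
Qed.

Lemma count_sum (R : realType) (X : R) m r : 0 <= X ->
  \sum_(j < m) (if (j <= r)%N then X else 0) <= r.+1%:R * X.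
Proof.
move=> X0.
have -> : \sum_(j < m) (if (j <= r)%N then X else 0) = (minn m r.+1)%:R * X.
  elim: m => [|m IH]; first by rewrite big_ord0 mul0r.
  rewrite big_ord_recr /= IH.
  case: (leqP m r) => h.
    have -> : minn m.+1 r.+1 = (minn m r.+1).+1 by rewrite minnSS; congr _.+1; lia.
    by rewrite mulrSr mulrDl mul1r.
  have -> : minn m.+1 r.+1 = minn m r.+1 by lia.
  by rewrite addr0.
by apply: ler_wpM2r => //; rewrite ler_nat; lia.
Qed.

Lemma adjK (R : realType) m n (A : 'M[R[i]]_(m, n)) : adj (adj A) = A.
Proof. by apply/matrixP => i j; rewrite !mxE conjcK. Qed.

Lemma nr_le0 (R : realType) (z : R[i]) : nr z <= 0 -> nr z = 0.
Proof. by move=> h; apply/le_anti; rewrite h nr_ge0. Qed.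

Lemma bound_F (R : realType) n0 N (E : 'M[R[i]]_(n0, N.+1)) (V : 'M[R[i]]_N.+1)
  (Hm Mv rho : R) :
  0 < rho -> rho <= 1 -> 0 <= Hm -> 0 <= Mv ->
  (forall r t, nr (E r t) <= if (t <= r)%N then Hm else 0) ->
  (forall t k, nr (V t k) <= if (t <= k)%N then Mv * rho ^+ (k - t) else 0) ->
  forall r k, nr ((E *m V) r k) <= (n0%:R * Hm * Mv / rho ^+ n0) * rho ^+ k.
Proof.
move=> r0 r1 H0 M0 hE hV r k.
rewrite mxE; apply: (le_trans (nr_sum _ _ _)).
have rn0 : 0 < rho ^+ n0 by apply: exprn_gt0.
apply: (@le_trans _ _ (\sum_(t < N.+1) (if (t <= r)%N then Hm * Mv * rho ^+ k / rho ^+ n0 else 0))).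
  apply: ler_sum => t _; rewrite nrM.
  have := hE r t; have := hV t k.
  case: ifP => htk; case: ifP => htr => h1 h2.
  - have ht : (t <= n0)%N by have := ltn_ord r; lia.
    have hP : 0 <= Mv * rho ^+ (k - t) by rewrite mulr_ge0 // exprn_ge0 //; lra.
    have e1 := ler_pM (nr_ge0 _) (nr_ge0 _) h2 h1.
    have hQ : rho ^+ n0 <= rho ^+ t by apply: ler_wiXn2l => //; lra.
    rewrite ler_pdivlMr //.
    apply: (le_trans (ler_wpM2r (ltW rn0) e1)).
    apply: (@le_trans _ _ (Hm * (Mv * rho ^+ (k - t)) * rho ^+ t)).
      by apply: ler_wpM2l => //; rewrite mulr_ge0.
    by rewrite -{2}(subnK htk) exprD; rewrite le_eqVlt; apply/orP; left; apply/eqP; ring.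
  - by rewrite (nr_le0 h2) mul0r.
  - rewrite (nr_le0 h1) mulr0 divr_ge0 ?mulr_ge0 ?exprn_ge0 //; lra.
  - by rewrite (nr_le0 h1) mulr0.
apply: (le_trans (count_sum _ _ _)).
  by rewrite divr_ge0 ?mulr_ge0 ?exprn_ge0 //; lra.
have Z0 : 0 <= Mv * (rho ^+ k / rho ^+ n0) by rewrite mulr_ge0 // divr_ge0 // exprn_ge0 //; lra.
have -> : n0%:R * Hm * Mv / rho ^+ n0 * rho ^+ k = n0%:R * Hm * (Mv * (rho ^+ k / rho ^+ n0)) by ring.
have -> : r.+1%:R * (Hm * Mv * rho ^+ k / rho ^+ n0) = r.+1%:R * Hm * (Mv * (rho ^+ k / rho ^+ n0)) by ring.
apply: ler_wpM2r => //; apply: ler_wpM2r => //.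
by rewrite ler_nat.
Qed.

Lemma sum_const_le (R : realType) m (f : 'I_m -> R) (C : R) :
  (forall j, f j <= C) -> \sum_j f j <= m%:R * C.
Proof.
move=> h; apply: (le_trans (ler_sum _ (fun j _ => h j))).
by rewrite sumr_const card_ord mulr_natl.
Qed.

Lemma bound_VF (R : realType) N m (V : 'M[R[i]]_N.+1) (F : 'M[R[i]]_(m, N.+1))
  (Mv Cf rho : R) :
  0 < rho -> rho < 1 -> 0 <= Mv -> 0 <= Cf ->
  (forall t k, nr (V t k) <= if (t <= k)%N then Mv * rho ^+ (k - t) else 0) ->
  (forall p t, nr (F p t) <= Cf * rho ^+ t) ->
  forall k p, nr ((V *m adj F) k p) <= Mv * Cf / (1 - rho) * rho ^+ k.
Proof.
move=> r0 r1 M0 C0 hV hF k p.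
rewrite mxE; apply: (le_trans (nr_sum _ _ _)).
apply: (@le_trans _ _ (\sum_(t < N.+1) Mv * Cf * rho ^+ k *
     (if (k <= t)%N then rho ^+ (t - k) else 0))).
  apply: ler_sum => t _; rewrite !mxE nrM nrJ.
  have := hV k t; have := hF p t.
  case: ifP => hkt h1 h2; last by rewrite (nr_le0 h2) mul0r mulr0.
  apply: (le_trans (ler_pM (nr_ge0 _) (nr_ge0 _) h2 h1)).
  have hQ : rho ^+ (t - k) <= 1 by apply: exprn_ile1; lra.
  have -> : Mv * rho ^+ (t - k) * (Cf * rho ^+ t) =
     Mv * Cf * rho ^+ k * rho ^+ (t - k) * rho ^+ (t - k).
    by rewrite -{2}(subnK hkt) exprD; ring.
  rewrite -[X in _ <= X]mulr1; apply: ler_wpM2l => //.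
  by rewrite !mulr_ge0 // exprn_ge0 //; lra.
rewrite -mulr_sumr.
have -> : Mv * Cf / (1 - rho) * rho ^+ k = Mv * Cf * rho ^+ k * (1 - rho)^-1 by ring.
apply: ler_wpM2l; first by rewrite !mulr_ge0 // exprn_ge0 //; lra.
apply: geo_shift; lra.
Qed.

Lemma bound_VV (R : realType) N (V : 'M[R[i]]_N.+1) (Mv rho : R) :
  0 < rho -> rho < 1 -> 0 <= Mv ->
  (forall t k, nr (V t k) <= if (t <= k)%N then Mv * rho ^+ (k - t) else 0) ->
  forall k l : 'I_N.+1, nr ((V *m adj V) k l) <=
     Mv ^+ 2 / (1 - rho) * rho ^+ (`|(k%:Z - l%:Z)%R|%N).
Proof.
move=> r0 r1 M0 hV k l.
set d := `|(k%:Z - l%:Z)%R|%N.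
rewrite mxE; apply: (le_trans (nr_sum _ _ _)).
apply: (@le_trans _ _ (\sum_(t < N.+1) Mv ^+ 2 * rho ^+ d *
     (if (maxn k l <= t)%N then rho ^+ (t - maxn k l) else 0))).
  apply: ler_sum => t _; rewrite !mxE nrM nrJ.
  have h2 := hV k t; have h1 := hV l t.
  case: (boolP (maxn k l <= t)%N) => hm; last first.
    rewrite mulr0; move: hm; rewrite geq_max negb_and => /orP[] /negbTE hh.
      by rewrite hh in h2; rewrite (nr_le0 h2) mul0r.
    by rewrite hh in h1; rewrite (nr_le0 h1) mulr0.
  move: hm; rewrite geq_max => /andP[hkt hlt].
  rewrite hkt in h2; rewrite hlt in h1.
  apply: (le_trans (ler_pM (nr_ge0 _) (nr_ge0 _) h2 h1)).
  have -> : Mv * rho ^+ (t - k) * (Mv * rho ^+ (t - l)) =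
     Mv ^+ 2 * rho ^+ ((t - k) + (t - l)) by rewrite exprD; ring.
  rewrite -mulrA; apply: ler_wpM2l; first exact: exprn_ge0.
  rewrite -exprD; apply: ler_wiXn2l; [lra|lra|].
  rewrite /d; lia.
rewrite -mulr_sumr.
have -> : Mv ^+ 2 / (1 - rho) * rho ^+ d = Mv ^+ 2 * rho ^+ d * (1 - rho)^-1 by ring.
apply: ler_wpM2l; first by rewrite !mulr_ge0 // exprn_ge0 //; lra.
apply: geo_shift; lra.
Qed.

Lemma bound_mid (R : realType) N m (X : 'M[R[i]]_(N.+1, m)) (W : 'M[R[i]]_m)
  (Y : 'M[R[i]]_(m, N.+1)) (D rho : R) :
  0 <= D -> 0 <= rho ->
  (forall k p, nr (X k p) <= D * rho ^+ k) ->
  (forall p q, nr (W p q) <= 1) ->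
  (forall q l, nr (Y q l) <= D * rho ^+ l) ->
  forall k l, nr ((X *m W *m Y) k l) <= m%:R * ((m%:R * D * rho ^+ k) * (D * rho ^+ l)).
Proof.
move=> D0 r0 hX hW hY k l.
rewrite mxE; apply: (le_trans (nr_sum _ _ _)).
apply: sum_const_le => q; rewrite nrM.
apply: ler_pM; [exact: nr_ge0|exact: nr_ge0| |exact: hY].
rewrite mxE; apply: (le_trans (nr_sum _ _ _)). rewrite -mulrA.
apply: sum_const_le => p; rewrite nrM -[X in _ <= X]mulr1.
by apply: ler_pM; [exact: nr_ge0|exact: nr_ge0|exact: hX|exact: hW].
Qed.

Lemma Umx_ut (R : realType) n0 N (h : {poly R[i]}) :
  size h = n0.+1 -> Umx h n0 N = ut N (rv idfun n0 h).
Proof.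
move=> hsz.
have h0 : forall i, (n0 < i)%N -> h`_i = 0.
  by move=> i hi; apply: nth_default; rewrite hsz.
apply/matrixP => s k; rewrite !mxE /Bf coef_poly /=.
case: (leqP s k) => hsk.
  case: (ltnP (k - s) n0.+1) => hk.
    have -> : (k <= s + n0)%N by lia.
    by have -> : (s + n0 - k)%N = (n0 - (k - s))%N by lia.
  by have -> : (k <= s + n0)%N = false by apply/negbTE; rewrite -ltnNge; lia.
have -> : (k <= s + n0)%N by lia.
by rewrite h0 //; lia.
Qed.

Lemma E_bound (R : realType) n0 N (h : {poly R[i]}) :
  size h = n0.+1 ->
  forall r t, nr (Emx h n0 N r t) <=
    if (t <= r)%N then \sum_(i < n0.+1) nr h`_i else 0.
Proof.
move=> hsz r t; rewrite mxE /Bf.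
case: ifP => htr; last by rewrite nr0.
case: (ltnP (r - t) n0.+1) => hi.
  exact: (@sum_ge_term R n0.+1 (fun i : 'I_n0.+1 => nr h`_i) (Ordinal hi) (fun j => nr_ge0 _)).
rewrite nth_default ?hsz // nr0.
by apply: sumr_ge0 => i _; apply: nr_ge0.
Qed.

Lemma V_bound (R : realType) N (P : {poly R[i]}) (Mv rho : R) :
  (forall n, nr P`_n <= Mv * rho ^+ n) ->
  forall t k, nr (ut N P t k) <= if (t <= k)%N then Mv * rho ^+ (k - t) else 0.
Proof.
move=> hP t k; rewrite mxE; case: ifP => _; last by rewrite nr0.
exact: hP.
Qed.

Lemma bernoulli (R : realType) (d : R) n : 0 <= d -> 1 + n%:R * d <= (1 + d) ^+ n.
Proof.
move=> d0; elim: n => [|n IH]; first by rewrite mul0r addr0 expr0.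
rewrite exprS -natr1 mulrDl mul1r.
have h : 0 <= (1 + d) ^+ n by rewrite exprn_ge0 //; lra.
have h2 : 0 <= n%:R * d by rewrite mulr_ge0.
nra.
Qed.

Lemma final_real (R : realType) (rho tau Cst eps x : R) :
  0 < rho -> rho < tau -> 0 <= Cst -> 0 < eps -> 0 < x ->
  exists N1 : nat, forall N d : nat, (N1 <= N)%N -> d%:R = N%:R * x ->
    Cst * rho ^+ d <= eps * tau ^+ d.
Proof.
move=> r0 rt C0 e0 x0.
pose del := tau / rho - 1.
have del0 : 0 < del by rewrite /del subr_gt0 ltr_pdivlMr // mul1r.
pose N1 := (Num.Def.trunc (Cst / (eps * del * x))).+1.
exists N1 => N d hN hd.
have hN1 : Cst / (eps * del * x) < N1%:R by apply: truncnS_gt.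
have hNr : N1%:R <= N%:R :> R by rewrite ler_nat.
have edx : 0 < eps * del * x by rewrite !mulr_gt0.
have hd2 : Cst <= eps * del * d%:R.
  have h : Cst < N%:R * (eps * del * x).
    have h2 := lt_le_trans hN1 hNr; by rewrite ltr_pdivrMr in h2.
  have -> : eps * del * d%:R = N%:R * (eps * del * x) by rewrite hd; ring.
  exact: ltW.
have hb := bernoulli d (ltW del0).
have e1 : 1 + del = tau / rho by rewrite /del; ring.
have e2 : tau ^+ d = rho ^+ d * (1 + del) ^+ d.
  by rewrite e1 exprMn exprVn; field; rewrite expf_neq0 // gt_eqF.
rewrite e2.
have rd : 0 <= rho ^+ d by rewrite exprn_ge0 // ltW.
have : Cst * rho ^+ d <= eps * (rho ^+ d * (1 + d%:R * del)).
  have -> : eps * (rho ^+ d * (1 + d%:R * del)) = eps * rho ^+ d + (eps * del * d%:R) * rho ^+ d by ring.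
  have : Cst * rho ^+ d <= (eps * del * d%:R) * rho ^+ d by apply: ler_wpM2r.
  have : 0 <= eps * rho ^+ d by rewrite mulr_ge0 // ltW.
  lra.
move=> h; apply: (le_trans h); apply: ler_wpM2l; first exact: ltW.
by apply: ler_wpM2l.
Qed.

Lemma ex_r0 (R : realType) (L : seq R[i]) (rho : R) :
  0 < rho -> (forall z, z \in L -> nr z < rho) ->
  exists r0, [/\ 0 <= r0, r0 < rho & forall z, z \in L -> nr z <= r0].
Proof.
move=> r0 ; elim: L => [|z L IH] hL.
  by exists 0; split => //; exact: ltW.
have [r1 [h1 h2 h3]] : exists r1, [/\ 0 <= r1, r1 < rho & forall w, w \in L -> nr w <= r1].
  by apply: IH => w hw; apply: hL; rewrite inE hw orbT.
have hz : nr z < rho by apply: hL; rewrite inE eqxx.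
exists (Num.max (nr z) r1); split.
- by rewrite le_max h1 orbT.
- by rewrite gt_max hz h2.
- move=> w; rewrite inE => /orP[/eqP ->|hw]; first by rewrite le_max lexx.
  by rewrite le_max h3 ?orbT.
Qed.

Lemma absz_le (k l : nat) : (`|(k%:Z - l%:Z)%R|%N <= k + l)%N.
Proof. lia. Qed.

Lemma inv_T (R : realType) n (T Ti : 'M[R[i]]_n) :
  T *m Ti = 1%:M -> T \in unitmx /\ invmx T = Ti.
Proof.
move=> h; have [hu _] := mulmx1_unit h; split => //.
by rewrite -[invmx T]mulmx1 -h mulmxA mulVmx // mul1mx.
Qed.

Unset Implicit Arguments.

Theorem mainTheorem2 (R : realType) (n0 : nat) (a : int -> R[i])
  (hn0 : (1 <= n0)%N)
  (hherm : forall j : int, (`|j| <= n0)%N -> a j = (a (- j))^*)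
  (hK : exists alpha : seq R[i],
      [/\ size alpha = n0,
          all (fun z => `|z| < 1) alpha &
          Kpoly n0 a = \prod_(z <- alpha) ('X - z%:P)
                       * \prod_(z <- alpha) ('X - ((z^*)^-1)%:P)]) :
  (forall N : nat, (1 <= N)%N -> toeplitz_band n0 N a \in unitmx) /\
  (forall (x : R), 0 < x < 1 ->
   forall (b rho : R), 0 < b < 1 ->
     (forall z : R[i], root (Kpoly n0 a) z -> `|z| < 1 -> `|z| < rho%:C) ->
     rho < 1 ->
   forall eps : R, 0 < eps ->
   exists N1 : nat, forall N : nat, (N1 <= N)%N ->
     forall k l : 'I_N.+1,
       (`|(k%:Z - l%:Z)%R|%N)%:R = N%:R * x ->
       `|invmx (toeplitz_band n0 N a) k l|
         <= (eps * powR rho (b * (`|(k%:Z - l%:Z)%R|%N)%:R))%:C).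
Proof.
case: hK => alpha [hs hall hKe].
have h0 := alpha_nz hs hherm hKe.
set h := \prod_(z <- alpha) ('X - z%:P) in hKe h0.
set c := \prod_(z <- alpha) (- (z^*)^-1).
have hKe' : Kpoly n0 a = h * (c%:P * rv conjc n0 h) by rewrite hKe (g_eq hs h0).
have hsz : size h = n0.+1 by rewrite size_prod_XsubC hs.
have hc : c != 0.
  rewrite prodf_seq_neq0; apply/allP => z hz /=.
  rewrite oppr_eq0 invr_eq0 conjc_eq0; apply: contraNneq h0 => <-; exact: hz.
have hr : rv idfun n0 h = \prod_(z <- alpha) (1 - z *: 'X) by rewrite -hs rv_prod.
pose U N := Umx h n0 N.
pose V N := ut N (\prod_(z <- alpha) geom z N).
pose E N := Emx h n0 N.
have hUV : forall N, U N *m V N = 1%:M.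
  move=> N; rewrite /U /V Umx_ut // hr ut_mul -big_split /= ut_prod.
  by apply: big1 => z _; exact: ut_geom.
have hVU : forall N, V N *m U N = 1%:M.
  move=> N; rewrite /U /V Umx_ut // hr ut_mul mulrC -big_split /= ut_prod.
  by apply: big1 => z _; exact: ut_geom.
have hT : forall N, toeplitz_band n0 N a = c *: (adj (E N) *m E N + adj (U N) *m U N).
  by move=> N; apply: toep_fact.
have hinv := fun N => inv_formula (E N) hc (hUV N) (hVU N).
split.
  move=> N _; have := inv_T (hinv N); rewrite -hT; by case.
move=> x /andP[x0 x1] b rho /andP[b0 b1] hroots rho1 eps heps.
have hzr : forall z, z \in alpha -> nr z < rho.
  move=> z hz; have := hroots z.
  have hrt : root (Kpoly n0 a) z by rewrite hKe rootM /h root_prod_XsubC hz.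
  have hz1 : `|z| < 1 := allP hall z hz.
  by move/(_ hrt hz1); rewrite nrE ltcR.
have rho0 : 0 < rho.
  have hsz' : (0 < size alpha)%N by rewrite hs.
  have := hzr _ (mem_nth 0 hsz'); have := nr_ge0 (nth 0 alpha 0); lra.
have [r0 [r00 r0r hr0]] := ex_r0 rho0 hzr.
have [Mv [Mv0 hMv]] := geomprod_bound r00 r0r hr0.
pose Hm := \sum_(i < n0.+1) nr h`_i.
have Hm0 : 0 <= Hm by apply: sumr_ge0 => i _; apply: nr_ge0.
pose Cf := n0%:R * Hm * Mv / rho ^+ n0.
have Cf0 : 0 <= Cf by rewrite /Cf divr_ge0 ?mulr_ge0 ?exprn_ge0 //; lra.
pose D := Mv * Cf / (1 - rho).
have D0 : 0 <= D by rewrite /D; apply: divr_ge0; [exact: mulr_ge0|lra].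
have hVb : forall N t k, nr (V N t k) <= if (t <= k)%N then Mv * rho ^+ (k - t) else 0.
  by move=> N; apply: V_bound; apply: hMv.
have hEb : forall N r t, nr (E N r t) <= if (t <= r)%N then Hm else 0.
  by move=> N; apply: E_bound.
have hFb : forall N r k, nr ((E N *m V N) r k) <= Cf * rho ^+ k.
  by move=> N; exact: (bound_F rho0 (ltW rho1) Hm0 Mv0 (hEb N) (hVb N)).
have hVFb : forall N k p, nr ((V N *m adj (E N *m V N)) k p) <= D * rho ^+ k.
  by move=> N; exact: (bound_VF rho0 rho1 Mv0 Cf0 (hVb N) (hFb N)).
have hFVb : forall N q l, nr (((E N *m V N) *m adj (V N)) q l) <= D * rho ^+ l.
  move=> N q l.
  have -> : (E N *m V N) *m adj (V N) = adj (V N *m adj (E N *m V N)) by rewrite adj_mul adjK.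
  by rewrite mxE nrJ; apply: hVFb.
pose Cst := nr c^-1 * (Mv ^+ 2 / (1 - rho) + n0%:R * (n0%:R * D * D)).
have Cst0 : 0 <= Cst.
  rewrite /Cst; apply: mulr_ge0; first exact: nr_ge0.
  apply: addr_ge0; first by apply: divr_ge0; [exact: sqr_ge0|lra].
  apply: mulr_ge0; first exact: ler0n.
  by apply: mulr_ge0 => //; apply: mulr_ge0 => //; exact: ler0n.
pose tau := powR rho b.
have rt : rho < tau.
  rewrite /tau -{1}(powRr1 (ltW rho0)) /powR (gt_eqF rho0) ltr_expR.
  have := @ln_lt0 R rho; rewrite rho0 rho1 /= => /(_ isT) hl; nra.
have [N1 HN1] := final_real rho0 rt Cst0 heps x0.
exists N1 => N hN k l hd.
have [d ed] : {d : nat | d = `|(k%:Z - l%:Z)%R|%N} by eexists.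
rewrite -ed in hd *.
have hpow : powR rho (b * d%:R) = tau ^+ d by rewrite powRrM powR_mulrn // powR_ge0.
rewrite hpow nrE lecR.
apply: le_trans (HN1 N d hN hd).
have hinvT : invmx (toeplitz_band n0 N a) = c^-1 *:
     (V N *m (1%:M - adj (E N *m V N) *m invmx (1%:M + E N *m V N *m adj (E N *m V N)) *m
     (E N *m V N)) *m adj (V N)).
  have := inv_T (hinv N); rewrite -hT; by case.
rewrite hinvT.
set F := E N *m V N; set W := invmx (1%:M + F *m adj F).
have -> : V N *m (1%:M - adj F *m W *m F) *m adj (V N) =
    V N *m adj (V N) - (V N *m adj F) *m W *m (F *m adj (V N)).
  by rewrite mulmxBr mulmx1 mulmxBl !mulmxA.
have hentry : forall (A B : 'M[R[i]]_N.+1), (c^-1 *: (A - B)) k l = c^-1 * (A k l - B k l).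
  by move=> A B; rewrite !mxE.
rewrite hentry nrM.
apply: (le_trans (ler_wpM2l (nr_ge0 _) (nrB _ _))).
rewrite /Cst -mulrA; apply: ler_wpM2l; first exact: nr_ge0.
rewrite mulrDl; apply: lerD.
  by have := bound_VV rho0 rho1 Mv0 (hVb N) k l; rewrite -ed.
have hm := bound_mid D0 (ltW rho0) (hVFb N) (W_bound F) (hFVb N) k l.
apply: (le_trans hm).
have -> : n0%:R * (n0%:R * D * rho ^+ k * (D * rho ^+ l)) =
    n0%:R * (n0%:R * D * D) * rho ^+ (k + l) by rewrite exprD; ring.
apply: ler_wpM2l; first by apply: mulr_ge0; [exact: ler0n|apply: mulr_ge0 => //; apply: mulr_ge0 => //; exact: ler0n].
apply: ler_wiXn2l; [lra|lra|rewrite ed; exact: absz_le].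
Qed.
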